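(* For every finite simple graph $G$, one has $\mathfrak a(G)=-M(G)$, where $M(G)$ is the multiplicity of $-1$ as a root of the independence polynomial $P_G(x)$ (zero if $P_G(-1)\neq 0$). In particular, $\mathfrak a(G)=0$ if and only if $P_G(-1)\neq 0$.
   Context: Let $G$ be a finite simple graph on vertex set $[N]$, $K$ a field, $S=K[x_1,\dots,x_N]$, and $I(G)\subset S$ the edge ideal generated by $x_ix_j$ for $\{i,j\}\in E(G)$. Let $\alpha(G)$ be the independence number of $G$ (which equals $\dim S/I(G)$). The Hilbert series of $S/I(G)$ is written uniquely as $h_G(t)/(1-t)^{\alpha(G)}$ with $h_G(t)\in\mathbb Z[t]$ a polynomial whose leading coefficient is nonzero (the $h$-polynomial). The $\mathfrak a$-invariant is $\mathfrak a(G)=\deg h_G(t)-\alpha(G)$. The independence polynomial is $P_G(x)=\sum_i g_ix^i$, where $g_i$ is the number of independent sets of size $i$. *)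

(* Defs.v *)
From mathcomp Require Import all_boot all_order all_algebra.
Set Implicit Arguments. Unset Strict Implicit. Unset Printing Implicit Defensive.
Import Order.TTheory GRing.Theory Num.Theory.

Definition simple_graph (N : nat) (e : rel 'I_N) : Prop :=
  symmetric e /\ irreflexive e.

Definition indep (N : nat) (e : rel 'I_N) (A : {set 'I_N}) : bool :=
  [forall x in A, forall y in A, ~~ e x y].

Definition alpha (N : nat) (e : rel 'I_N) : nat :=
  \max_(A : {set 'I_N} | indep e A) #|A|.

Definition nindep (N : nat) (e : rel 'I_N) (i : nat) : nat :=
  #|[set A : {set 'I_N} | indep e A & #|A| == i]|.

Local Open Scope ring_scope.

(* independence polynomial P_G(x) = sum_i g_i x^i (all g_i = 0 for i > N) *)
Definition indep_poly (N : nat) (e : rel 'I_N) : {poly rat} :=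
  \poly_(i < N.+1) (nindep e i)%:R.

Definition Mult (N : nat) (e : rel 'I_N) : nat := mup (-1) (indep_poly e).

(* Monomials of S = K[x_1..x_N] of degree d are exponent vectors
   m : 'I_N -> nat with sum d (each exponent is then <= d, so we encode
   them as {ffun 'I_N -> 'I_d.+1}).  Since I(G) is a monomial ideal, the
   monomials not in I(G) (i.e. divisible by no x_i x_j with {i,j} an edge)
   form a K-basis of (S/I(G))_d. *)
Definition std_monomial (N : nat) (e : rel 'I_N) (d : nat)
    (m : {ffun 'I_N -> 'I_d.+1}) : bool :=
  ((\sum_(i < N) (m i : nat))%N == d) &&
  [forall i, forall j, e i j ==> ((m i : nat) == 0%N) || ((m j : nat) == 0%N)].

Definition hilb (N : nat) (e : rel 'I_N) (d : nat) : nat :=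
  #|[set m : {ffun 'I_N -> 'I_d.+1} | std_monomial e m]|.

(* h is the h-polynomial: as formal power series,
   (1 - t)^alpha(G) * sum_d hilb(d) t^d = h(t), i.e.
   HS(t) = h(t) / (1-t)^alpha(G); and h has nonzero leading coefficient. *)
Definition is_h_poly (N : nat) (e : rel 'I_N) (h : {poly int}) : Prop :=
  h != 0 /\
  forall d : nat,
    h`_d = \sum_(j < d.+1)
             (-1) ^+ j * ('C(alpha e, j))%:R * ((hilb e (d - j))%:R : int).

Definition a_inv (N : nat) (e : rel 'I_N) (h : {poly int}) : int :=
  ((size h).-1)%:Z - (alpha e)%:Z.

(* Main.v *)
Require Import Defs.
From mathcomp Require Import all_boot all_order all_algebra ring.
Import Order.TTheory GRing.Theory Num.Theory.
Set Implicit Arguments. Unset Strict Implicit. Unset Printing Implicit Defensive.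
Local Open Scope ring_scope.

Lemma coef_1subX (R : comNzRingType) k j :
  ((1 - 'X : {poly R}) ^+ k)`_j = (-1) ^+ j *+ 'C(k, j).
Proof.
elim: k j => [|k IH] j.
  rewrite expr0 coef1; case: j => [|j] //=; by rewrite ?bin0 ?mulr1n.
rewrite exprSr mulrBr mulr1 coefB coefMX IH.
case: j => [|j] /=; first by rewrite !bin0 subr0.
by rewrite IH binS exprS mulNr mul1r mulrnDr !mulNrn.
Qed.

Definition Bp (R : comNzRingType) n i : {poly R} := 'X^i * (1 - 'X) ^+ (n - i).
Definition hom (R : comNzRingType) n (q : {poly R}) : {poly R} :=
  \sum_(i < n.+1) q`_i *: Bp R n i.
Arguments hom {R}.

Lemma Bp_S (R : comNzRingType) n i : (i <= n)%N ->
  Bp R n.+1 i.+1 + Bp R n.+1 i = Bp R n i.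
Proof.
move=> le; rewrite /Bp subSS subSn // exprS exprSr.
set Y := (1 - 'X) ^+ (n - i); set Z := 'X^i.
ring.
Qed.

Lemma hom_S (R : comNzRingType) n (q : {poly R}) : (size q <= n.+1)%N ->
  hom n.+1 (('X + 1) * q) = hom n q.
Proof.
move=> sq; rewrite /hom.
under eq_bigr => i _ do rewrite mulrDl mul1r coefD coefXM scalerDl.
rewrite big_split /= big_ord_recl /= scale0r add0r [X in _ + X]big_ord_recr /=.
have -> : q`_n.+1 = 0 by apply/(leq_sizeP _ _ sq).
rewrite scale0r addr0 -big_split /=; apply: eq_bigr => i _.
by rewrite -scalerDr Bp_S // -ltnS.
Qed.

Lemma sign_sub (R : comNzRingType) n i : (i <= n)%N ->
  (-1) ^+ (n - i) = (-1) ^+ n * (-1) ^+ i :> R.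
Proof.
move=> le; rewrite -{2}(subnK le) exprD -mulrA -expr2 sqrr_sign.
by rewrite mulr1.
Qed.

Lemma hom_top (R : comNzRingType) n (q : {poly R}) : (size q <= n.+1)%N ->
  (hom n q)`_n = (-1) ^+ n * q.[-1].
Proof.
move=> sq; rewrite (horner_coef_wide _ sq) /hom coef_sum mulr_sumr.
apply: eq_bigr => i _; rewrite coefZ /Bp coefXnM.
have le : (i <= n)%N by rewrite -ltnS.
rewrite ltnNge le /= coef_1subX binn mulr1n sign_sub //.
by rewrite mulrCA.
Qed.

Lemma hom_size (R : comNzRingType) n (q : {poly R}) : (size (hom n q) <= n.+1)%N.
Proof.
apply/leq_sizeP => j lej; rewrite /hom coef_sum big1 // => i _.
rewrite coefZ /Bp coefXnM coef_1subX; case: ifP => _; first by rewrite mulr0.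
rewrite bin_small ?mulr0n ?mulr0 //.
have := ltn_ord i; rewrite ltnS => lei.
by rewrite ltn_sub2r // (leq_ltn_trans lei).
Qed.

Lemma size_hom (R : idomainType) n (q : {poly R}) : (size q <= n.+1)%N ->
  q.[-1] != 0 -> size (hom n q) = n.+1.
Proof.
move=> sq nz; apply/eqP; rewrite eqn_leq hom_size /=.
rewrite ltnNge; apply/negP => /leq_sizeP/(_ n (leqnn n))/eqP.
by rewrite hom_top // mulf_eq0 signr_eq0 /=; exact/negP.
Qed.

Lemma XsubN1 (R : comNzRingType) : ('X - (-1)%:P : {poly R}) = 'X + 1.
Proof. by rewrite polyCN opprK. Qed.

Lemma hom_pow (R : idomainType) k n (q : {poly R}) : q != 0 ->
  (size q + k <= n.+1)%N -> hom n (('X - (-1)%:P) ^+ k * q) = hom (n - k) q.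
Proof.
move=> qn0; elim: k n => [|k IH] n le; first by rewrite expr0 mul1r subn0.
have sq : (0 < size q)%N by rewrite size_poly_gt0.
case: n le => [|n] le; first by move: le; rewrite addnS ltnS leqNgt ltn_addr.
rewrite exprS -mulrA [X in hom _ (X * _)]XsubN1 hom_S ?IH ?subSS //.
  by move: le; rewrite addnS.
rewrite size_mul ?expf_neq0 ?polyXsubC_eq0 // size_exp_XsubC addSn /=.
by rewrite addnC; move: le; rewrite addnS.
Qed.

Definition cong (n : nat) (p q : {poly int}) := exists r, p = q + 'X^n * r.

Lemma cong_coef n p q i : cong n p q -> (i < n)%N -> p`_i = q`_i.
Proof. by move=> [r ->] lt; rewrite coefD coefXnM lt addr0. Qed.

Lemma cong_refl n p : cong n p p.
Proof. by exists 0; rewrite mulr0 addr0. Qed.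

Lemma cong_add n p1 q1 p2 q2 : cong n p1 q1 -> cong n p2 q2 -> cong n (p1 + p2) (q1 + q2).
Proof. by move=> [r1 ->] [r2 ->]; exists (r1 + r2); ring. Qed.

Lemma cong_mul n p1 q1 p2 q2 : cong n p1 q1 -> cong n p2 q2 -> cong n (p1 * p2) (q1 * q2).
Proof.
by move=> [r1 ->] [r2 ->]; exists (r1 * q2 + q1 * r2 + 'X^n * r1 * r2); ring.
Qed.

Lemma cong_pow n p q k : cong n p q -> cong n (p ^+ k) (q ^+ k).
Proof.
move=> c; elim: k => [|k IH]; first by rewrite !expr0; apply: cong_refl.
by rewrite !exprS; apply: cong_mul.
Qed.

Lemma cong_sum n (I : finType) (P : pred I) (F G : I -> {poly int}) :
  (forall i, P i -> cong n (F i) (G i)) ->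
  cong n (\sum_(i | P i) F i) (\sum_(i | P i) G i).
Proof.
move=> H; apply: (big_ind2 (cong n)) => //; first exact: cong_refl.
exact: cong_add.
Qed.

Definition T (D : nat) : {poly int} := \sum_(k < D) (if (0 < k)%N then 'X^k else 0).

Lemma T_S D : T D.+1 = T D + (if (0 < D)%N then 'X^D else 0).
Proof. by rewrite /T big_ord_recr. Qed.

Lemma T_cong i k : cong i.+1 (T (i.+1 + k)) (T i.+1).
Proof.
elim: k => [|k [r IH]]; first by rewrite addn0; apply: cong_refl.
rewrite addnS T_S IH /= exprD; exists (r + 'X^k); ring.
Qed.

Lemma T_mul d : (1 - 'X) * T d.+1 = 'X - 'X^(d.+1).
Proof.
elim: d => [|d IH]; first by rewrite /T big_ord1 /= mulr0 expr1 subrr.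
by rewrite T_S /= mulrDr IH !exprS; ring.
Qed.

Definition supp N D (m : {ffun 'I_N -> 'I_D}) : {set 'I_N} :=
  [set v | (m v : nat) != 0%N].

Lemma std_indep N (e : rel 'I_N) d (m : {ffun 'I_N -> 'I_d.+1}) :
  std_monomial e m = ((\sum_(i < N) (m i : nat))%N == d) && indep e (supp m).
Proof.
rewrite /std_monomial /indep; congr (_ && _).
apply/forallP/forallP => H x.
- apply/implyP => xs; apply/forallP => y; apply/implyP => ys; apply/negP => exy.
  move: (forallP (H x) y) => /implyP/(_ exy).
  move: xs ys; rewrite !inE => xs ys.
  by case/orP => /eqP E; [rewrite E in xs | rewrite E in ys].
- apply/forallP => y; apply/implyP => exy.
  case: (boolP ((m x : nat) == 0%N)) => //= mx; apply/negPn/negP => my.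
  move: (H x) => /implyP; rewrite inE mx => /(_ isT) /forallP /(_ y) /implyP.
  by rewrite inE my => /(_ isT); rewrite exy.
Qed.

Definition S N (e : rel 'I_N) D : {poly int} :=
  \sum_(A : {set 'I_N} | indep e A) T D ^+ #|A|.

Lemma sum_if_eq (I : finType) (P : pred I) (j : I) (x : {poly int}) :
  \sum_(A | P A) (if j == A then x else 0) = if P j then x else 0.
Proof.
rewrite -big_mkcondr; case: (boolP (P j)) => Pj.
  by apply: big_pred1 => A /=; apply/andP/eqP => [[_ /eqP <-]|->] //; rewrite eqxx.
by apply: big_pred0 => A /=; apply/andP => [[PA /eqP E]]; move: Pj; rewrite E PA.
Qed.

Lemma S_expand N (e : rel 'I_N) i :
  S e i.+1 = \sum_(m : {ffun 'I_N -> 'I_i.+1})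
     (if indep e (supp m) then 'X^(\sum_(v < N) (m v : nat)) else 0).
Proof.
pose F (A : {set 'I_N}) (v : 'I_N) (k : 'I_i.+1) : {poly int} :=
  if (v \in A) == (0 < k)%N then 'X^k else 0.
have E1 (A : {set 'I_N}) : T i.+1 ^+ #|A| = \sum_(m : {ffun 'I_N -> 'I_i.+1}) \prod_v F A v (m v).
  rewrite -prodr_const big_mkcond /= -bigA_distr_bigA /=.
  apply: eq_bigr => v _; case: (boolP (v \in A)) => vA.
    by apply: eq_bigr => k _; rewrite /F vA; case: (0 < k)%N.
  rewrite (bigD1 ord0) //= big1 ?addr0.
    by rewrite /F (negbTE vA) /= expr0.
  move=> k nk; rewrite /F (negbTE vA).
  by have -> : (0 < k)%N by rewrite lt0n; exact: nk.
have E2 (A : {set 'I_N}) (m : {ffun 'I_N -> 'I_i.+1}) : \prod_v F A v (m v) =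
    if supp m == A then 'X^(\sum_(v < N) (m v : nat)) else 0.
  case: eqP => [<-|neq].
    rewrite -prodrXr; apply: eq_bigr => v _.
    by rewrite /F inE lt0n eqxx.
  case: (boolP [exists v, (v \in A) != (0 < m v)%N]) => [/existsP [v Hv]|/existsPn H].
    by rewrite (bigD1 v) //= /F (negbTE Hv) mul0r.
  exfalso; apply: neq; apply/setP => v; rewrite inE.
  by have := H v; rewrite negbK => /eqP ->; rewrite lt0n.
rewrite /S (eq_bigr _ (fun A _ => E1 A)) exchange_big /=.
apply: eq_bigr => m _.
under eq_bigr => A _ do rewrite E2.
exact: sum_if_eq.
Qed.

Lemma hilb_S N (e : rel 'I_N) i : ((hilb e i)%:R : int) = (S e i.+1)`_i.
Proof.
rewrite S_expand coef_sum.
have -> : \sum_(m : {ffun 'I_N -> 'I_i.+1})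
    (if indep e (supp m) then 'X^(\sum_(v < N) (m v : nat)) else 0 : {poly int})`_i
  = \sum_(m : {ffun 'I_N -> 'I_i.+1}) (if std_monomial e m then 1 else 0).
  apply: eq_bigr => m _; rewrite std_indep.
  case: (indep e (supp m)); last by rewrite andbF coef0.
  by rewrite coefXn andbT eq_sym; case: eqP.
rewrite -(big_mkcond (fun m => std_monomial e m)) /=.
by rewrite sumr_const /hilb cardsE.
Qed.

Lemma S_cong N (e : rel 'I_N) i k : cong i.+1 (S e (i.+1 + k)) (S e i.+1).
Proof. by apply: cong_sum => A _; apply: cong_pow; apply: T_cong. Qed.

Lemma S_coef N (e : rel 'I_N) i D : (i < D)%N -> (S e D)`_i = (hilb e i)%:R.
Proof.
move=> lt; rewrite hilb_S -(subnKC lt); apply: cong_coef (S_cong _ _ _) _.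
exact: ltnSn.
Qed.

Lemma indep_le N (e : rel 'I_N) (A : {set 'I_N}) : indep e A -> (#|A| <= alpha e)%N.
Proof. by move=> H; rewrite /alpha; apply: leq_bigmax_cond. Qed.

Lemma alpha_att N (e : rel 'I_N) : exists A : {set 'I_N}, indep e A /\ #|A| = alpha e.
Proof.
have i0 : indep e set0 by apply/forallP => x; rewrite in_set0.
have pos : (0 < #|[pred A : {set 'I_N} | indep e A]|)%N.
  by apply/card_gt0P; exists set0.
have [A HA E] := eq_bigmax_cond (fun A : {set 'I_N} => #|A|) pos.
by exists A; split.
Qed.

Lemma alpha_leN N (e : rel 'I_N) : (alpha e <= N)%N.
Proof.
have [A [_ <-]] := alpha_att e.
by rewrite -[X in (_ <= X)%N]card_ord max_card.
Qed.

Definition h0 N (e : rel 'I_N) : {poly int} :=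
  \sum_(A : {set 'I_N} | indep e A) 'X^#|A| * (1 - 'X) ^+ (alpha e - #|A|).

Lemma h0_cong N (e : rel 'I_N) d :
  cong d.+1 ((1 - 'X) ^+ alpha e * S e d.+1) (h0 e).
Proof.
rewrite /S mulr_sumr; apply: cong_sum => A HA.
have le := indep_le HA.
rewrite -{1}(subnK le) exprD -mulrA -exprMn T_mul mulrC.
apply: cong_mul; last exact: cong_refl.
by apply: cong_pow; exists (-1); ring.
Qed.

Lemma h0_coef N (e : rel 'I_N) d :
  (h0 e)`_d = \sum_(j < d.+1)
             (-1) ^+ j * ('C(alpha e, j))%:R * ((hilb e (d - j))%:R : int).
Proof.
rewrite -(cong_coef (h0_cong e d) (ltnSn d)) coefM.
apply: eq_bigr => j _; rewrite coef_1subX mulr_natr S_coef //.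
by rewrite ltnS leq_subr.
Qed.

Lemma h0_map N (e : rel 'I_N) :
  map_poly intr (h0 e) = hom (alpha e) (indep_poly e) :> {poly rat}.
Proof.
rewrite rmorph_sum /hom.
under eq_bigr => A _ do rewrite rmorphM !rmorphXn rmorphB rmorph1 /= map_polyX.
rewrite (partition_big (fun A : {set 'I_N} => (inord #|A| : 'I_(alpha e).+1)) xpredT) //=.
apply: eq_bigr => j _.
rewrite /indep_poly coef_poly.
have ltj : (j < N.+1)%N by rewrite ltnS (leq_trans _ (alpha_leN e)) // -ltnS.
rewrite ltj.
rewrite (eq_big (fun A => indep e A && (#|A| == j)) (fun _ => Bp rat (alpha e) j)).
- rewrite (eq_bigl (fun A => A \in [set A : {set 'I_N} | indep e A & #|A| == j])).
    by rewrite sumr_const scaler_nat.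
  by move=> A; rewrite inE.
- move=> A /=; case: (boolP (indep e A)) => //= HA.
  by rewrite -val_eqE /= inordK // ltnS indep_le.
- move=> A /andP [HA /eqP <-]; by rewrite /Bp inordK // ltnS indep_le.
Qed.

Lemma size_indep_poly N (e : rel 'I_N) : size (indep_poly e) = (alpha e).+1.
Proof.
apply/eqP; rewrite eqn_leq; apply/andP; split.
  apply/leq_sizeP => j lej; rewrite /indep_poly coef_poly.
  case: ifP => // _; rewrite /nindep.
  suff -> : [set A : {set 'I_N} | indep e A & #|A| == j] = set0 by rewrite cards0.
  apply/setP => A; rewrite !inE; apply/negP => /andP [HA /eqP E].
  by have := indep_le HA; rewrite E leqNgt lej.
rewrite ltnNge; apply/negP => /leq_sizeP /(_ _ (leqnn _)).
rewrite /indep_poly coef_poly ltnS alpha_leN; apply/eqP.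
rewrite pnatr_eq0 -lt0n /nindep; apply/card_gt0P.
have [A [HA E]] := alpha_att e; exists A; by rewrite inE HA E eqxx.
Qed.

Lemma main_size N (e : rel 'I_N) :
  size (h0 e) = ((alpha e - Mult e).+1)%N /\ (Mult e <= alpha e)%N.
Proof.
set P := indep_poly e; set M := Mult e.
have sP := size_indep_poly e.
have P0 : P != 0 by rewrite -size_poly_gt0 sP.
have : (('X - (-1)%:P) ^+ M %| P) by rewrite -mup_geq.
case/dvdpP => Q PQ.
have Q0 : Q != 0 by apply: contraNneq P0 => Q0; rewrite PQ Q0 mul0r.
have nr : ~~ root Q (-1).
  apply/negP; rewrite root_factor_theorem => /dvdpP [Q' EQ].
  have : (mup (-1) P <= M)%N by [].
  rewrite mup_leq // => /negP; apply; rewrite PQ EQ -mulrA -exprS.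
  exact: dvdp_mull.
have sPQ : size P = (size Q + M)%N.
  rewrite PQ size_mul ?expf_neq0 ?polyXsubC_eq0 // size_exp_XsubC.
  by rewrite addnS.
have leM : (M <= alpha e)%N.
  have : (0 < size Q)%N by rewrite size_poly_gt0.
  move=> sQ; move: sP; rewrite sPQ => E; rewrite -ltnS -E.
  by case: (size Q) sQ => // s _; rewrite addSn ltnS leq_addl.
split => //.
rewrite -(@size_map_inj_poly _ _ (intr : int -> rat) (@intr_inj _) (rmorph0 _)) h0_map -/P PQ mulrC.
rewrite hom_pow //; last by rewrite -sPQ sP.
apply: size_hom; first by move: sP; rewrite sPQ => E; rewrite -subSn // -E addnK.
by [].
Qed.

Lemma h_unique N (e : rel 'I_N) h : is_h_poly e h -> h = h0 e.
Proof. by case=> _ H; apply/polyP => d; rewrite H h0_coef. Qed.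

Theorem corollary1p3 (N : nat) (e : rel 'I_N) :
  simple_graph e ->
  (exists h : {poly int}, is_h_poly e h) /\
  (forall h : {poly int}, is_h_poly e h ->
     a_inv e h = - ((Mult e)%:Z) /\
     (a_inv e h = 0 <-> (indep_poly e).[-1] != 0)).
Proof.
move=> _; have [sz le] := main_size e.
have ah : forall h, is_h_poly e h -> a_inv e h = - ((Mult e)%:Z).
  move=> h /h_unique ->; rewrite /a_inv sz succnK.
  by rewrite -(subzn le) addrAC subrr add0r.
split.
  exists (h0 e); split; last exact: h0_coef.
  by rewrite -size_poly_gt0 sz.
move=> h Hh; split; first exact: ah.
rewrite ah //.
have P0 : indep_poly e != 0 by rewrite -size_poly_gt0 size_indep_poly.
split.
  move/eqP; rewrite oppr_eq0 => /eqP [] M0.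
  apply/negP => /eqP r; move: M0; rewrite /Mult.
  have : ('X - (-1)%:P %| indep_poly e) by rewrite -root_factor_theorem; apply/eqP.
  by rewrite XsubC_dvd // => /[swap] ->.
move=> nr; rewrite /Mult mupNroot //.
Qed.
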